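(* (i) For every abstract storage device $D$, $C(D)=\max_{\pi\in\mathcal{P}_D}\log|\pi|$. (ii) For all ASDs $D,D'$, $C(D\times D')=C(D)+C(D')$. (iii) For every ASD $D$ and every integer $k\ge1$, $C(D^{(k)})\le k\cdot C(D)$.
   Context: An abstract storage device (ASD) is a pair $D=(\mathcal{S}_D,\mathcal{P}_D)$, $\mathcal{S}_D$ a finite set and $\mathcal{P}_D$ a finite family of partitions of $\mathcal{S}_D$; $|\pi|$ is the number of blocks. For a partition $\pi$ of $\mathcal{S}'$ and $\phi:\mathcal{S}\to\mathcal{S}'$, $\pi\circ\phi$ is the partition of $\mathcal{S}$ with $x,y$ in the same block iff $\phi(x),\phi(y)$ are in the same block of $\pi$; $\pi\preceq\rho$ means every block of $\pi$ lies in a block of $\rho$; $\wedge$ is the meet of partitions. $D\le D'$ means there exist $\phi:\mathcal{S}_D\to\mathcal{S}_{D'}$, $\alpha:\mathcal{P}_D\to\mathcal{P}_{D'}$ with $\alpha(\pi)\circ\phi\preceq\pi$ for all $\pi\in\mathcal{P}_D$. $C_m$ is the ASD with state space $\{1,\dots,m\}$ and partition set $\{\{\{1\},\dots,\{m\}\}\}$. The storage capacity is $C(D)=\max\{\log m: m\in\mathbb{N}, C_m\le D\}$ (log base 2). The direct product $D\times D'$ has state space $\mathcal{S}_D\times\mathcal{S}_{D'}$ and partition set $\{\pi\times\pi'\}$ with $\pi\times\pi'=\{B\times B':B\in\pi,B'\in\pi'\}$. $D^{(k)}$ has state space $\mathcal{S}_D$ and partition set $\{\pi_1\wedge\cdots\wedge\pi_k:\pi_i\in\mathcal{P}_D\}$.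 *)

(* Defs.v *)
From HB Require Import structures.
From mathcomp Require Import all_classical all_reals all_analysis.
From mathcomp Require Import all_boot all_order all_algebra.
Set Implicit Arguments. Unset Strict Implicit. Unset Printing Implicit Defensive.
Import Order.TTheory GRing.Theory Num.Theory.
Local Open Scope ring_scope.

(* An abstract storage device: a finite state space with a finite family of
   partitions of it (partitions in the sense of finset's [partition P D]). *)
Record asd := ASD { st : finType; parts : {set {set {set st}}} }.

(* Well-formedness: each member of parts is a partition of the state space.
   Moreover the state space and family are nonempty (needed for C(D) to be
   defined). *)
Definition wf_asd (D : asd) : Prop :=
  [/\ (forall p, p \in parts D -> finset.partition p [set: st D]),
      (0 < #|st D|)%N & parts D != finset.set0].

Definition pcomp (S S' : finType) (pi : {set {set S'}}) (phi : S -> S')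
  : {set {set S}} := [set phi @^-1: B | B : {set S'} in pi] :\ finset.set0.

Definition refines (S : finType) (pi rho : {set {set S}}) : Prop :=
  forall B, B \in pi -> exists2 C, C \in rho & B \subset C.

Definition asd_le (D D' : asd) : Prop :=
  exists (phi : st D -> st D') (alpha : {set {set st D}} -> {set {set st D'}}),
    forall p, p \in parts D -> alpha p \in parts D' /\ refines (pcomp (alpha p) phi) p.

Definition Cm (m : nat) : asd :=
  @ASD 'I_m [set [set [set i] | i : 'I_m]].

Definition log2 (R : realType) (x : R) : R := ln x / ln 2.
Arguments log2 {R} x.

Definition cap_set (R : realType) (D : asd) : set R :=
  [set x | exists2 m : nat, (0 < m)%N /\ asd_le (Cm m) D & x = log2 (m%:R : R)].

Arguments cap_set R D : clear implicits.

Definition is_max (R : realType) (A : set R) (x : R) : Prop :=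
  A x /\ (forall y, A y -> y <= x).

(* storage capacity C(D) = max of cap_set (taken as its supremum; part (i)
   of the theorem asserts that the maximum is attained) *)
Definition capacity (R : realType) (D : asd) : R := sup (cap_set R D).

Arguments capacity R D : clear implicits.

Definition prodpart (S S' : finType) (p : {set {set S}}) (q : {set {set S'}})
  : {set {set S * S'}} := [set setX B B' | B in p, B' in q].

Definition asd_prod (D D' : asd) : asd :=
  @ASD (st D * st D')%type [set prodpart p q | p in parts D, q in parts D'].

Definition pmeet (S : finType) (p q : {set {set S}}) : {set {set S}} :=
  [set B :&: C | B in p, C in q] :\ finset.set0.

(* partitions pi_1 /\ ... /\ pi_k (k >= 1), built as ((pi_1 /\ pi_2) /\ ...) *)
Definition kmeets (S : finType) (P : {set {set {set S}}}) (k : nat)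
  : {set {set {set S}}} :=
  iter k.-1 (fun Q : {set {set {set S}}} => [set pmeet p q | p in Q, q in P]) P.

Definition asd_pow (D : asd) (k : nat) : asd := @ASD (st D) (kmeets (parts D) k).

(* Main.v *)
Require Import Defs.
From mathcomp Require Import all_boot all_order all_algebra.
From mathcomp Require Import all_classical all_reals all_analysis.
Import Order.TTheory GRing.Theory Num.Theory.
Set Implicit Arguments. Unset Strict Implicit.

Lemma Cm_le (D : asd) (m : nat) :
  (forall p, p \in parts D -> finset.partition p [set: st D]) ->
  asd_le (Cm m) D <-> exists2 p, p \in parts D & (m <= #|p|)%N.
Proof.
move=> Hp; split.
- move=> [phi [alpha H]].
  set p0 := [set [set i] | i : 'I_m].
  have p0in : p0 \in parts (Cm m) by rewrite /Cm /= inE.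
  have [qin href] := H p0 p0in.
  set q := alpha p0 in qin href.
  have Hq := Hp q qin.
  have cov : forall x, x \in finset.cover q by move=> x; rewrite (cover_partition Hq) inE.
  pose f i := finset.pblock q (phi i).
  have finj : injective f.
    move=> i j fij.
    have Bq : f i \in q by apply: pblock_mem.
    have inpc : phi @^-1: f i \in Defs.pcomp q phi.
      rewrite /Defs.pcomp in_setD1; apply/andP; split; last by apply: imset_f.
      apply/finset.set0Pn; exists i; rewrite inE /f mem_pblock; exact: cov.
    have [C /imsetP [k _ ->] sub] := href _ inpc.
    have hi := fintype.subsetP sub i; have hj := fintype.subsetP sub j.
    rewrite !inE /f mem_pblock cov in hi; rewrite !inE fij /f mem_pblock cov in hj.
    by rewrite (eqP (hi isT)) (eqP (hj isT)).
  exists q => //.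
  have -> : m = #|[set f i | i in [set: 'I_m]]| by rewrite card_imset // cardsT card_ord.
  apply: subset_leq_card; apply/fintype.subsetP => _ /imsetP [i _ ->]; exact: pblock_mem.
- move=> [q qin hm].
  have Hq := Hp q qin.
  pose g (i : 'I_m) : {set st D} := enum_val (widen_ord hm i).
  have gq : forall i, g i \in q by move=> i; apply: enum_valP.
  have gne : forall i, g i != finset.set0.
    by move=> i; apply/negP => /eqP e; have := gq i; rewrite e (partition0 Hq).
  have ex : forall i, exists x, x \in g i by move=> i; apply/finset.set0Pn.
  pose phi i := xchoose (ex i).
  have phig : forall i, phi i \in g i by move=> i; apply: xchooseP.
  exists phi, (fun _ => q) => p pin; rewrite /Cm /= inE in pin; rewrite (eqP pin); split => // B0 /setD1P [ne /imsetP [B Bq eB]]; subst B0.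
  have [i hi] := finset.set0Pn _ ne.
  exists (finset.set1 i); first by apply: imset_f.
  apply/fintype.subsetP => j; rewrite !inE => hj; rewrite inE in hi.
  have tq := partition_trivIset Hq.
  have e1 := def_pblock tq Bq hi.
  have e2 := def_pblock tq Bq hj.
  have e3 := def_pblock tq (gq i) (phig i).
  have e4 := def_pblock tq (gq j) (phig j).
  have : g j = g i by rewrite -e4 -e3 e1 e2.
  move/enum_val_inj => /(congr1 val) /= ?; apply/eqP; exact: val_inj.
Qed.

Local Open Scope ring_scope.

Definition Mx (D : asd) : nat := \big[maxn/0%N]_(p in parts D) #|p|.

Lemma Mx_ex D : wf_asd D -> exists2 p, p \in parts D & #|p| = Mx D.
Proof.
move=> [_ _ ne].
have : (0 < #|parts D|)%N by rewrite card_gt0.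
move/(eq_bigmax_cond (fun p : {set {set st D}} => #|p|)) => [p pin e].
by exists p; rewrite // /Mx e.
Qed.

Lemma Mx_ge D p : p \in parts D -> (#|p| <= Mx D)%N.
Proof. by move=> pin; rewrite /Mx (bigD1 p pin) /= leq_maxl. Qed.

Lemma asd_part_gt0 (S : finType) (p : {set {set S}}) :
  finset.partition p [set: S] -> (0 < #|S|)%N -> (0 < #|p|)%N.
Proof.
move=> Hp pos; rewrite lt0n; apply/negP => /eqP/cards0_eq e.
have := cover_partition Hp; rewrite e /finset.cover big_set0 => e2.
by move: pos; rewrite -cardsT -e2 cards0.
Qed.

Lemma Mx_gt0 D : wf_asd D -> (0 < Mx D)%N.
Proof.
move=> w; have [p pin <-] := Mx_ex w; case: w => Hp pos _.
exact: asd_part_gt0 (Hp p pin) pos.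
Qed.

Lemma le_Mx D m : wf_asd D -> asd_le (Cm m) D <-> (m <= Mx D)%N.
Proof.
move=> w; have Hp := w; case: Hp => Hp _ _.
rewrite Cm_le //; split.
- by move=> [p pin hm]; apply: leq_trans hm (Mx_ge pin).
- by move=> hm; have [p pin e] := Mx_ex w; exists p; rewrite ?e.
Qed.

Section R.
Variable R : realType.

Lemma log2_le (a b : nat) : (0 < a)%N -> (a <= b)%N -> log2 (a%:R : R) <= log2 (b%:R : R).
Proof.
move=> a0 ab; rewrite /log2 ler_pM2r; last by rewrite invr_gt0 ln_gt0 // ltr1n.
rewrite ler_ln ?posrE ?ltr0n ?ler_nat //; exact: leq_trans ab.
Qed.

Lemma is_max_sup (A : set R) x : is_max A x -> sup A = x.
Proof.
move=> [Ax ub]; apply/eqP; rewrite eq_le; apply/andP; split.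
- by apply: ge_sup => //; exists x.
- by apply: ub_le_sup => //; exists x.
Qed.

Lemma cap_max D : wf_asd D -> is_max (cap_set R D) (log2 ((Mx D)%:R : R)).
Proof.
move=> w; split.
- by exists (Mx D) => //; split; [exact: Mx_gt0|rewrite le_Mx].
- move=> y [m [m0 hm] ->]; apply: log2_le => //; by rewrite -le_Mx.
Qed.

Lemma capE D : wf_asd D -> capacity R D = log2 ((Mx D)%:R : R).
Proof. by move=> w; apply: is_max_sup; apply: cap_max. Qed.

End R.
Lemma part_ne (S : finType) (p : {set {set S}}) B :
  finset.partition p [set: S] -> B \in p -> exists x, x \in B.
Proof. by move=> Hp Bp; apply/finset.set0Pn; exact: partition_neq0 Hp Bp. Qed.

Lemma part_cov (S : finType) (p : {set {set S}}) x :
  finset.partition p [set: S] -> x \in finset.cover p.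
Proof. by move=> Hp; rewrite (cover_partition Hp) inE. Qed.

Lemma prodpart_partition (S S' : finType) (p : {set {set S}}) (q : {set {set S'}}) :
  finset.partition p [set: S] -> finset.partition q [set: S'] ->
  finset.partition (prodpart p q) [set: S * S'].
Proof.
move=> Hp Hq; apply/and3P; split.
- apply/eqP/setP => [[x y]]; rewrite inE; apply/bigcupP.
  exists (finset.setX (finset.pblock p x) (finset.pblock q y)).
    by apply: imset2_f; apply: pblock_mem; apply: part_cov.
  by rewrite inE /= !mem_pblock !part_cov.
- apply/finset.trivIsetP => A B /imset2P [B1 B1' h1 h1' ->] /imset2P [B2 B2' h2 h2' ->] neq.
  rewrite -setI_eq0; apply/eqP/setP => [[x y]]; rewrite !inE /=.
  apply/negP => /andP [/andP [x1 y1] /andP [x2 y2]]; move: neq.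
  have tp := partition_trivIset Hp; have tq := partition_trivIset Hq.
  by rewrite -(def_pblock tp h1 x1) -(def_pblock tp h2 x2) -(def_pblock tq h1' y1) -(def_pblock tq h2' y2) eqxx.
- apply/imset2P => [[B B' hB hB' e]].
  have [x hx] := part_ne Hp hB; have [y hy] := part_ne Hq hB'.
  have : (x, y) \in finset.setX B B' by rewrite inE /= hx hy.
  by rewrite -e inE.
Qed.

Lemma card_prodpart (S S' : finType) (p : {set {set S}}) (q : {set {set S'}}) :
  finset.partition p [set: S] -> finset.partition q [set: S'] ->
  #|prodpart p q| = (#|p| * #|q|)%N.
Proof.
move=> Hp Hq; rewrite /prodpart curry_imset2X card_in_imset ?cardsX //.
move=> [B1 B1'] [B2 B2']; rewrite !inE /= => /andP [h1 h1'] /andP [h2 h2'] e.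
have [x1 hx1] := part_ne Hp h1; have [x2 hx2] := part_ne Hp h2.
have [y1 hy1] := part_ne Hq h1'; have [y2 hy2] := part_ne Hq h2'.
have mem : forall a b, ((a, b) \in finset.setX B1 B1') = ((a, b) \in finset.setX B2 B2') by move=> a b; rewrite /= e.
congr pair; apply/setP => z.
- apply/idP/idP => hz.
  + by have := mem z y1; rewrite !inE /= hz hy1 /= => /esym /andP [].
  + by have := mem z y2; rewrite !inE /= hz hy2 /= => /andP [].
- apply/idP/idP => hz.
  + by have := mem x1 z; rewrite !inE /= hz hx1 /= => /esym /andP [].
  + by have := mem x2 z; rewrite !inE /= hz hx2 /= => /andP [].
Qed.

Lemma Mx_le D N : (forall p, p \in parts D -> (#|p| <= N)%N) -> (Mx D <= N)%N.
Proof. by move=> H; rewrite /Mx; apply: (big_ind (fun m => m <= N)%N) => //= a b ha hb; rewrite geq_max ha hb. Qed.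

Lemma wf_prod D D' : wf_asd D -> wf_asd D' -> wf_asd (asd_prod D D').
Proof.
move=> [Hp pos ne] [Hp' pos' ne']; split => /=.
- by move=> _ /imset2P [p q hp hq ->]; apply: prodpart_partition; [apply: Hp|apply: Hp'].
- by rewrite card_prod muln_gt0 pos pos'.
- have [p hp] := finset.set0Pn _ ne; have [q hq] := finset.set0Pn _ ne'.
  by apply/finset.set0Pn; exists (prodpart p q); apply: imset2_f.
Qed.

Lemma Mx_prod D D' : wf_asd D -> wf_asd D' -> Mx (asd_prod D D') = (Mx D * Mx D')%N.
Proof.
move=> w w'; have w2 := w; have w2' := w'; case: w2 => [Hp _ _]; case: w2' => [Hp' _ _].
apply/eqP; rewrite eqn_leq; apply/andP; split.
- apply: Mx_le => _ /imset2P [p q hp hq ->].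
  by rewrite card_prodpart ?Hp ?Hp' //; apply: leq_mul; apply: Mx_ge.
- have [p hp <-] := Mx_ex w; have [q hq <-] := Mx_ex w'.
  rewrite -card_prodpart ?Hp ?Hp' //; apply: Mx_ge; exact: imset2_f.
Qed.

Lemma pmeet_partition (S : finType) (p q : {set {set S}}) :
  finset.partition p [set: S] -> finset.partition q [set: S] ->
  finset.partition (pmeet p q) [set: S].
Proof.
move=> Hp Hq; apply/and3P; split.
- apply/eqP/setP => x; rewrite inE; apply/bigcupP.
  exists (finset.pblock p x :&: finset.pblock q x).
    rewrite in_setD1; apply/andP; split.
      by apply/finset.set0Pn; exists x; rewrite inE !mem_pblock !part_cov.
    by apply: imset2_f; apply: pblock_mem; apply: part_cov.
  by rewrite inE !mem_pblock !part_cov.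
- apply/finset.trivIsetP => A B /setD1P [_ /imset2P [B1 B1' h1 h1' ->]] /setD1P [_ /imset2P [B2 B2' h2 h2' ->]] neq.
  rewrite -setI_eq0; apply/eqP/setP => x; rewrite !inE /=.
  apply/negP => /andP [/andP [x1 y1] /andP [x2 y2]]; move: neq.
  have tp := partition_trivIset Hp; have tq := partition_trivIset Hq.
  by rewrite -(def_pblock tp h1 x1) -(def_pblock tp h2 x2) -(def_pblock tq h1' y1) -(def_pblock tq h2' y2) eqxx.
- by rewrite /pmeet setD11.
Qed.

Lemma card_pmeet (S : finType) (p q : {set {set S}}) : (#|pmeet p q| <= #|p| * #|q|)%N.
Proof.
apply: leq_trans (subset_leq_card (subsetDl _ _)) _.
by rewrite curry_imset2X -cardsX; apply: leq_imset_card.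
Qed.
Lemma iter_meets D n : wf_asd D ->
  let I := iter n (fun Q : {set {set {set st D}}} => [set pmeet p q | p in Q, q in parts D]) (parts D) in
  (forall Q, Q \in I -> finset.partition Q [set: st D] /\ (#|Q| <= Mx D ^ n.+1)%N) /\ I != finset.set0.
Proof.
move=> w; have w2 := w; case: w2 => [Hp pos ne] /=.
elim: n => [|n [IH1 IH2]] /=.
  by split => // Q hQ; split; [exact: Hp|rewrite expn1; exact: Mx_ge].
split.
- move=> _ /imset2P [p q hp hq ->].
  have [P1 C1] := IH1 p hp.
  split; first by apply: pmeet_partition => //; exact: Hp.
  apply: leq_trans (card_pmeet p q) _; rewrite expnSr; apply: leq_mul => //; exact: Mx_ge.
- have [p hp] := finset.set0Pn _ IH2; have [q hq] := finset.set0Pn _ ne.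
  by apply/finset.set0Pn; exists (pmeet p q); apply: imset2_f.
Qed.

Lemma wf_pow D k : wf_asd D -> wf_asd (asd_pow D k) /\ (Mx (asd_pow D k) <= Mx D ^ k.-1.+1)%N.
Proof.
move=> w; have [H1 H2] := iter_meets k.-1 w; have w2 := w; case: w2 => [_ pos _].
split; first by split => //= p hp; have [] := H1 p hp.
by apply: Mx_le => p hp; have [] := H1 p hp.
Qed.

Local Open Scope ring_scope.

Theorem proposition3 (R : realType) :
  (forall D : asd, wf_asd D ->
     is_max (cap_set R D) (capacity R D) /\
     is_max [set x | exists2 p, p \in parts D & x = log2 (#|p|%:R : R)]
            (capacity R D)) /\
  (forall D D' : asd, wf_asd D -> wf_asd D' ->
     capacity R (asd_prod D D') = capacity R D + capacity R D') /\
  (forall (D : asd) (k : nat), wf_asd D -> (1 <= k)%N ->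
     capacity R (asd_pow D k) <= k%:R * capacity R D).
Proof.
have ln2 : 0 < ln (2 : R) by rewrite ln_gt0 // ltr1n.
split; [|split].
- move=> D w; rewrite capE //; split; first exact: cap_max.
  have w2 := w; case: w2 => [Hp pos _].
  split; first by have [p hp e] := Mx_ex w; exists p; rewrite ?e.
  move=> y [p hp ->]; exact: (log2_le R (asd_part_gt0 (Hp p hp) pos) (Mx_ge hp)).
- move=> D D' w w'; rewrite (capE R (wf_prod w w')) (capE R w) (capE R w') Mx_prod // natrM /log2 lnM ?mulrDl //;
  by rewrite posrE ltr0n Mx_gt0.
- move=> D k w k1; have [wp hle] := wf_pow k w.
  rewrite !capE //; apply: le_trans (log2_le R (Mx_gt0 wp) hle) _.
  rewrite prednK // /log2 natrX lnXn ?ltr0n ?Mx_gt0 //.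
  by rewrite -[_ *+ k]mulr_natl mulrA.
Qed.
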